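(* Let $\beta>0$ and let $E'=\{h_1,\dots,h_L\}\subset\mathbb R$ with $2\le L<\infty$. For $m\in[-1,1]$ define $\hat B(m)\in\mathbb R^L$ by $$\hat B(m)_i=\log\frac{\cosh(\beta m+h_i)}{\cosh h_i}-\frac1L\sum_{j=1}^L\log\frac{\cosh(\beta m+h_j)}{\cosh h_j},\qquad i=1,\dots,L.$$ Then the map $m\mapsto\hat B(m)$ is injective.
   Context: This is the stability vector $\hat B_{\nu_m}$ of the mean-field random-field Ising model with $F(\nu)=-\beta(\nu(+)^2+\nu(-)^2)$, local measures $\alpha[h](\sigma)=e^{h\sigma}/(2\cosh h)$ for $\sigma\in\{-1,+1\}$, evaluated at the measure $\nu_m$ on $\{-1,+1\}$ with mean $m$. *)

(* Defs.v *)
From mathcomp Require Import all_boot all_order all_algebra.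
From mathcomp Require Import all_classical all_reals all_analysis.
Set Implicit Arguments. Unset Strict Implicit. Unset Printing Implicit Defensive.
Import Order.TTheory GRing.Theory Num.Theory.
Local Open Scope ring_scope.

Definition cosh {R : realType} (x : R) : R := (expR x + expR (- x)) / 2.

Definition logratio {R : realType} (beta m h : R) : R :=
  ln (cosh (beta * m + h) / cosh h).

Definition Bhat {R : realType} (L : nat) (beta : R) (h : 'I_L -> R) (m : R)
  : 'rV[R]_L :=
  \row_(i < L) (logratio beta m (h i)
                 - L%:R^-1 * \sum_(j < L) logratio beta m (h j)).

(* Main.v *)
Require Import Defs.
From mathcomp Require Import all_boot all_order all_algebra.
From mathcomp Require Import all_classical all_reals all_analysis.
From mathcomp Require Import ring lra.
Import Order.TTheory GRing.Theory Num.Theory.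
Local Open Scope ring_scope.

Lemma cosh_gt0 (R : realType) (x : R) : 0 < cosh x.
Proof.
rewrite /cosh; apply: divr_gt0; last by [].
by rewrite addr_gt0 // expR_gt0.
Qed.

Lemma cosh_key (R : realType) (a b x y : R) :
  cosh (a + x) * cosh (b + y) = cosh (b + x) * cosh (a + y) -> a = b \/ x = y.
Proof.
rewrite /cosh !opprD !expRD !expRN.
move: (expR_gt0 a) (expR_gt0 b) (expR_gt0 x) (expR_gt0 y).
have Ia : forall u v : R, u = v -> expR u = expR v by move=> u v ->.
suff S : forall A B X Y : R, 0 < A -> 0 < B -> 0 < X -> 0 < Y ->
   (A * X + A^-1 / X) / 2 * ((B * Y + B^-1 / Y) / 2) =
    (B * X + B^-1 / X) / 2 * ((A * Y + A^-1 / Y) / 2) -> A = B \/ X = Y.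
  move=> ha hb hx hy E; case: (S _ _ _ _ ha hb hx hy E) => /expR_inj; by [left|right].
move=> A B X Y hA hB hX hY E.
have nA : A != 0 by rewrite gt_eqF.
have nB : B != 0 by rewrite gt_eqF.
have nX : X != 0 by rewrite gt_eqF.
have nY : Y != 0 by rewrite gt_eqF.
have key : (A ^+ 2 - B ^+ 2) * (X ^+ 2 - Y ^+ 2) =
  4 * A * X * B * Y *
  ((A * X + A^-1 / X) / 2 * ((B * Y + B^-1 / Y) / 2)
   - (B * X + B^-1 / X) / 2 * ((A * Y + A^-1 / Y) / 2)).
  by field; rewrite nA nB nX nY.
move: key; rewrite E subrr mulr0 => /eqP; rewrite mulf_eq0 => /orP [] /eqP H.
- left.
  have : (A - B) * (A + B) = 0 by rewrite -H; ring.
  move/eqP; rewrite mulf_eq0 => /orP [/eqP|/eqP]; first by move/subr0_eq.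
  move=> H2; exfalso; lra.
- right.
  have : (X - Y) * (X + Y) = 0 by rewrite -H; ring.
  move/eqP; rewrite mulf_eq0 => /orP [/eqP|/eqP]; first by move/subr0_eq.
  move=> H2; exfalso; lra.
Qed.

Lemma logratioE (R : realType) (beta m h : R) :
  logratio beta m h = ln (cosh (beta * m + h)) - ln (cosh h).
Proof. by rewrite /logratio ln_div // posrE cosh_gt0. Qed.

Theorem mainTheorem5 (R : realType) (beta : R) (L : nat) (h : 'I_L -> R) :
  0 < beta -> (2 <= L)%N -> injective h ->
  forall m1 m2 : R, -1 <= m1 <= 1 -> -1 <= m2 <= 1 ->
  Bhat beta h m1 = Bhat beta h m2 -> m1 = m2.
Proof.
move=> hb hL hinj m1 m2 _ _ E.
have l0 : (0 < L)%N by apply: leq_trans hL.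
have l1 : (1 < L)%N by [].
pose i0 := Ordinal l0; pose i1 := Ordinal l1.
have hne : h i0 <> h i1 by move=> /hinj /(congr1 val).
have E0 := congr1 (fun M : 'rV_L => M 0 i0) E.
have E1 := congr1 (fun M : 'rV_L => M 0 i1) E.
rewrite /= /Bhat !mxE in E0 E1.
have D : logratio beta m1 (h i0) - logratio beta m2 (h i0) =
         logratio beta m1 (h i1) - logratio beta m2 (h i1) by lra.
rewrite !logratioE in D.
have P : forall z : R, cosh z \in Num.pos by move=> z; rewrite posrE cosh_gt0.
have D2 : ln (cosh (beta * m1 + h i0) * cosh (beta * m2 + h i1)) =
          ln (cosh (beta * m2 + h i0) * cosh (beta * m1 + h i1)).
  by rewrite (lnM (P _) (P _)) (lnM (P _) (P _)); lra.
move: (ln_inj (rpredM (P _) (P _)) (rpredM (P _) (P _)) D2).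
move/cosh_key => [H|//].
apply: (mulfI (x:=beta)); first by rewrite gt_eqF.
exact: H.
Qed.
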